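(* Let $z_0\in\mathbb{R}^n$ be a row vector with $z_0[i]\ge0$ for $i\in\mathcal{V}$, $z_0[(i,j)]=0$ for $(i,j)\in\mathcal{E}$, and $\sum_j z_0[j]>0$, and define $z_k=z_{k-1}M_k$ for $k\ge1$. Let $\mu_z$ satisfy $0<\mu_z\le\sum_j z_0[j]$, let $c=\min\{M[a,b]: M\in\mathcal{M},\,M[a,b]>0\}$, let $l$ be a positive integer such that for every $i\in\mathcal{V}$ there exist $l$ matrices in $\mathcal{M}$ (possibly repeated) whose product, in some order, has all entries of its column indexed by $i$ strictly positive, and set $\mu=\mu_z c^l/n$. Then for each $i\in\mathcal{V}$, with probability $1$, $z_k[i]\ge\mu$ for infinitely many $k$.
   Context: Let $\mathcal{G}=(\mathcal{V},\mathcal{E})$ be a strongly connected directed graph with $\mathcal{V}=\{1,\dots,m\}$, with a self-loop $(i,i)\in\mathcal{E}$ at every node. Let $\mathcal{O}_i=\{j:(i,j)\in\mathcal{E}\}$ and $D_i=|\mathcal{O}_i|$. At each time step $k\ge1$ each link $(i,j)\in\mathcal{E}$ is reliable with probability $q_{ij}\in(0,1]$, independently across links and across time steps; let $X_k[i,j]=1$ if $(i,j)$ is reliable at step $k$ and $0$ otherwise. Let $n=m+|\mathcal{E}|$ and index vector entries and rows/columns of $n\times n$ matrices by $\mathcal{V}\cup\mathcal{E}$. The random matrix $M_k$ is defined by: for $i\in\mathcal{V}$ and $(i,j)\in\mathcal{E}$, $M_k[i,j]=X_k[i,j]/D_i$ and $M_k[i,(i,j)]=(1-X_k[i,j])/D_i$,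 all other entries of row $i$ being $0$; for $(i,j)\in\mathcal{E}$, $M_k[(i,j),j]=X_k[i,j]$ and $M_k[(i,j),(i,j)]=1-X_k[i,j]$, all other entries of row $(i,j)$ being $0$. $\mathcal{M}$ denotes the finite set of all $2^{|\mathcal{E}|}$ matrices obtainable this way. *)

(* Defs.v *)
From HB Require Import structures.
From mathcomp Require Import all_boot all_order all_algebra.
From mathcomp Require Import all_classical all_reals all_analysis.
Set Implicit Arguments. Unset Strict Implicit. Unset Printing Implicit Defensive.
Import Order.TTheory GRing.Theory Num.Theory.
Local Open Scope ring_scope.
Local Open Scope classical_set_scope.

Definition edge_t (m : nat) (E : {set 'I_m * 'I_m}) : finType :=
  {e : 'I_m * 'I_m | e \in E}.

(* Index set V \cup E (disjoint union): inl i for nodes, inr e for links. *)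
Definition idx (m : nat) (E : {set 'I_m * 'I_m}) : finType :=
  ('I_m + edge_t E)%type.

Definition outdeg (m : nat) (E : {set 'I_m * 'I_m}) (i : 'I_m) : nat :=
  #|[set j | (i, j) \in E]|.

(* The matrix M determined by a reliability pattern x : E -> bool
   (x e = true iff link e is reliable). Matrices are functions idx -> idx -> R. *)
Definition Mmat (R : realType) (m : nat) (E : {set 'I_m * 'I_m})
  (x : {ffun edge_t E -> bool}) (a b : idx E) : R :=
  match a, b with
  | inl i, inl j =>
      match @insub _ (fun e => e \in E) (edge_t E) (i, j) with
      | Some e => (x e)%:R / (outdeg E i)%:R
      | None => 0
      end
  | inl i, inr e => if (val e).1 == i then (~~ x e)%:R / (outdeg E i)%:R else 0
  | inr e, inl j => if (val e).2 == j then (x e)%:R else 0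
  | inr e, inr e' => if e == e' then (~~ x e)%:R else 0
  end.

Definition vmul (R : realType) (I : finType) (z : I -> R) (M : I -> I -> R) : I -> R :=
  fun b => \sum_(a : I) z a * M a b.
Definition mmul (R : realType) (I : finType) (A B : I -> I -> R) : I -> I -> R :=
  fun a b => \sum_(c : I) A a c * B c b.
Definition mid (R : realType) (I : finType) : I -> I -> R :=
  fun a b => (a == b)%:R.
Definition mprod (R : realType) (I : finType) (s : seq (I -> I -> R)) : I -> I -> R :=
  foldr (@mmul R I) (@mid R I) s.

(* c = min { M[a,b] : M in the set of all 2^|E| matrices, M[a,b] > 0 }.
   All entries lie in [0,1], so 1 is a neutral element for this min. *)
Definition cmin (R : realType) (m : nat) (E : {set 'I_m * 'I_m}) : R :=
  \big[Num.min/1]_(x : {ffun edge_t E -> bool})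
    \big[Num.min/1]_(a : idx E)
      \big[Num.min/1]_(b : idx E | 0 < Mmat R x a b) Mmat R x a b.

(* z_0 = z0, z_k = z_{k-1} M_k, where M_{k} = Mmat (X (k-1) t). *)
Fixpoint zseq (R : realType) (m : nat) (E : {set 'I_m * 'I_m})
  (z0 : idx E -> R) (Xs : nat -> {ffun edge_t E -> bool}) (k : nat) : idx E -> R :=
  match k with
  | 0 => z0
  | k'.+1 => vmul (zseq z0 Xs k') (Mmat R (Xs k'))
  end.

Definition indep_links (d : measure_display) (T : measurableType d) (R : realType)
  (P : probability T R) (m : nat) (E : {set 'I_m * 'I_m})
  (X : nat -> T -> {ffun edge_t E -> bool}) : Prop :=
  forall (F : seq (nat * edge_t E)) (b : nat * edge_t E -> bool),
    uniq F ->
    P [set t | forall p, p \in F -> X p.1 t p.2 = b p] =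
    (\prod_(p <- F) P [set t | X p.1 t p.2 = b p])%E.

(* Main.v *)
Require Import Defs.
From HB Require Import structures.
From mathcomp Require Import all_boot all_order all_algebra.
From mathcomp Require Import all_classical all_reals all_analysis.
From mathcomp Require Import ring zify.
Import Order.TTheory GRing.Theory Num.Theory.
Local Open Scope ring_scope.
Local Open Scope classical_set_scope.
Set Implicit Arguments. Unset Strict Implicit.

Lemma Mmat_ge0 (R : realType) m (E : {set 'I_m * 'I_m}) x a b :
  0 <= Mmat R (E:=E) x a b.
Proof.
case: a => [i|e]; case: b => [j|e'] /=.
- by case: insubP => // e _ _; rewrite divr_ge0.
- by case: ifP => // _; rewrite divr_ge0.
- by case: ifP.
- by case: ifP.
Qed.

Lemma sum_insub (R : realType) m (E : {set 'I_m * 'I_m}) (u : 'I_m)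
  (g : edge_t E -> R) :
  \sum_(j : 'I_m) match @insub _ (fun e => e \in E) (edge_t E) (u, j) with
                  | Some e => g e | None => 0 end =
  \sum_(e : edge_t E | (val e).1 == u) g e.
Proof.
rewrite (partition_big (fun e : edge_t E => (val e).2) xpredT) //.
apply: eq_bigr => j _.
case: insubP => [e0 He0 Hv|Hn].
- rewrite (big_pred1 e0) // => e /=.
  apply/idP/idP.
  + move=> /andP[/eqP h1 /eqP h2]; apply/eqP/val_inj; rewrite Hv.
    by rewrite [val e]surjective_pairing h1 h2.
  + by move/eqP => ->; rewrite Hv /= !eqxx.
- rewrite big_pred0 // => e /=.
  apply/negP => /andP[/eqP h1 /eqP h2]; move/negP: Hn; apply.
  have := valP e; by rewrite [val e]surjective_pairing h1 h2.
Qed.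

Lemma outdeg_sum (R : realType) m (E : {set 'I_m * 'I_m}) (u : 'I_m) :
  (outdeg E u)%:R = \sum_(e : edge_t E | (val e).1 == u) (1 : R).
Proof.
rewrite -(sum_insub u (fun _ => (1:R))).
rewrite /outdeg -sum1_card natr_sum big_mkcond /=.
apply: eq_bigr => j _ /=.
have -> : (j \in [set j0 | (u, j0) \in E]%classic) = ((u, j) \in E) by apply/idP/idP; rewrite in_setE.
by case: insubP => [e -> _|/negbTE ->].
Qed.

Lemma sum_const_mul (R : realType) (I : finType) (P : pred I) (c : R) :
  \sum_(i | P i) c = (\sum_(i | P i) (1:R)) * c.
Proof. by rewrite big_distrl /=; apply: eq_bigr => i _; rewrite GRing.mul1r. Qed.

Lemma Mmat_row (R : realType) m (E : {set 'I_m * 'I_m}) x a :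
  (forall i : 'I_m, (i, i) \in E) ->
  \sum_(b : idx E) Mmat R (E:=E) x a b = 1.
Proof.
move=> loops.
rewrite /idx big_sumType /=.
case: a => [u|e] /=.
- rewrite (sum_insub u (fun e => (x e)%:R / (outdeg E u)%:R)).
  rewrite -big_mkcond /= -big_split /=.
  have Dn : (outdeg E u)%:R != 0 :> R.
    rewrite pnatr_eq0 -lt0n /outdeg; apply/card_gt0P; exists u.
    by rewrite in_setE /= loops.
  rewrite (eq_bigr (fun _ => 1 / (outdeg E u)%:R)); last first.
    by move=> e _; rewrite -mulrDl; case: (x e); rewrite /= ?add0r ?addr0.
  rewrite sum_const_mul -outdeg_sum mul1r mulfV //.

- rewrite -big_mkcond /= (big_pred1 (sval e).2); last by move=> j; rewrite /= eq_sym.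
  rewrite -big_mkcond /= (big_pred1 e); last by move=> j; rewrite /= eq_sym.
  by case: (x e); rewrite /= ?add0r ?addr0.
Qed.

Lemma vmul_mmul (R : realType) (I : finType) (z : I -> R) (A B : I -> I -> R) :
  vmul (vmul z A) B = vmul z (mmul A B).
Proof.
apply/funext => b; rewrite /vmul /mmul.
under eq_bigr do rewrite big_distrl /=.
rewrite exchange_big /=; apply: eq_bigr => a _.
by rewrite big_distrr /=; apply: eq_bigr => c _; rewrite mulrA.
Qed.

Lemma vmul_mid (R : realType) (I : finType) (z : I -> R) : vmul z (@mid R I) = z.
Proof.
apply/funext => b; rewrite /vmul /mid (bigD1 b) //= eqxx mulr1 big1 ?addr0 //.
by move=> a /negbTE ->; rewrite mulr0.
Qed.

Lemma zseq_S (R : realType) m (E : {set 'I_m * 'I_m}) (z : idx E -> R) Ys r :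
  zseq z Ys r.+1 = zseq (vmul z (Mmat R (Ys 0%N))) (fun j => Ys j.+1) r.
Proof.
elim: r => [|r IH] //.
have -> : zseq z Ys r.+2 = vmul (zseq z Ys r.+1) (Mmat R (Ys r.+1)) by [].
by rewrite IH.
Qed.

Lemma map_iota1 (A : Type) (f : nat -> A) r :
  [seq f j | j <- iota 1 r] = [seq f j.+1 | j <- iota 0 r].
Proof. by rewrite -(addn0 1%N) iotaDl -map_comp. Qed.

Lemma zseq_prod (R : realType) m (E : {set 'I_m * 'I_m}) r :
  forall (z : idx E -> R) Ys,
  zseq z Ys r = vmul z (mprod [seq Mmat R (Ys j) | j <- iota 0 r]).
Proof.
elim: r => [|r IH] z Ys; first by rewrite /= vmul_mid.
by rewrite zseq_S IH vmul_mmul /= map_iota1.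
Qed.

Lemma zseq_add (R : realType) m (E : {set 'I_m * 'I_m}) (z0 : idx E -> R) Xs k r :
  zseq z0 Xs (k + r) = zseq (zseq z0 Xs k) (fun j => Xs (k + j)%N) r.
Proof. by elim: r => [|r IH]; rewrite ?addn0 // addnS /= IH. Qed.

Lemma zseq_ge0 (R : realType) m (E : {set 'I_m * 'I_m}) (z0 : idx E -> R) Xs k a :
  (forall a, 0 <= z0 a) -> 0 <= zseq z0 Xs k a.
Proof.
move=> h; elim: k a => [|k IH] a //=.
by apply: sumr_ge0 => b _; rewrite mulr_ge0 ?Mmat_ge0.
Qed.

Lemma zseq_sum (R : realType) m (E : {set 'I_m * 'I_m}) (z0 : idx E -> R) Xs k :
  (forall i : 'I_m, (i, i) \in E) ->
  \sum_a zseq z0 Xs k a = \sum_a z0 a.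
Proof.
move=> loops; elim: k => [|k IH] //=; rewrite -IH /vmul exchange_big /=.
by apply: eq_bigr => a _; rewrite -big_distrr /= Mmat_row // mulr1.
Qed.

Lemma mprod_ge0 (R : realType) m (E : {set 'I_m * 'I_m}) s a b :
  0 <= mprod [seq Mmat R (E:=E) x | x <- s] a b.
Proof.
elim: s a b => [|x s IH] a b /=; first by rewrite /mid ler0n.
by apply: sumr_ge0 => c _; rewrite mulr_ge0 ?Mmat_ge0.
Qed.

Fixpoint reach (R : realType) m (E : {set 'I_m * 'I_m})
  (s : seq {ffun edge_t E -> bool}) (a b : idx E) : Prop :=
  match s with
  | [::] => a = b
  | x :: s' => exists c, 0 < Mmat R x a c /\ reach R s' c b
  end.

Lemma reach_of_pos (R : realType) m (E : {set 'I_m * 'I_m}) s a b :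
  0 < mprod [seq Mmat R (E:=E) x | x <- s] a b -> reach R s a b.
Proof.
elim: s a b => [|x s IH] a b /=.
  by rewrite /mid; case: eqP => // _; rewrite ltxx.
move=> hpos.
have [c hc] : exists c, 0 < Mmat R x a c * mprod [seq Mmat R x0 | x0 <- s] c b.
  case: (pselect (exists c, 0 < Mmat R x a c * mprod [seq Mmat R x0 | x0 <- s] c b)) => // hn.
  exfalso; move: hpos; rewrite /mmul ltNge => /negP; apply.
  apply: sumr_le0 => c _; rewrite leNgt; apply/negP => h; exact: (hn (ex_intro _ c h)).
exists c; split.
- rewrite lt_def Mmat_ge0 andbT; apply/eqP => h0.
  by move: hc; rewrite h0 mul0r ltxx.
- apply: IH; rewrite lt_def mprod_ge0 andbT; apply/eqP => h0.
  by move: hc; rewrite h0 mulr0 ltxx.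
Qed.

Lemma bigmin_le (R : realType) (I : finType) (P : pred I) (F : I -> R) j :
  P j -> \big[Num.min/1]_(i | P i) F i <= F j.
Proof.
by move=> Pj; rewrite (bigD1 j) //= ge_min lexx.
Qed.

Lemma bigmin_ge0 (R : realType) (I : finType) (P : pred I) (F : I -> R) :
  (forall i, P i -> 0 <= F i) -> 0 <= \big[Num.min/1]_(i | P i) F i.
Proof.
move=> h; elim/big_ind: _ => //; first by move=> x y hx hy; rewrite le_min hx hy.
Qed.

Lemma cmin_ge0 (R : realType) m (E : {set 'I_m * 'I_m}) : 0 <= cmin R E.
Proof.
apply: bigmin_ge0 => x _; apply: bigmin_ge0 => a _; apply: bigmin_ge0 => b.
by move/ltW.
Qed.

Lemma cmin_le (R : realType) m (E : {set 'I_m * 'I_m}) (x : {ffun edge_t E -> bool}) (a b : idx E) :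
  0 < Mmat R x a b -> cmin R E <= Mmat R x a b.
Proof.
move=> h; rewrite /cmin (bigD1 x) //= ge_min; apply/orP; left.
rewrite (bigD1 a) //= ge_min; apply/orP; left.
by rewrite (bigD1 b) //= ge_min lexx.
Qed.

Lemma reach_lb (R : realType) m (E : {set 'I_m * 'I_m}) s a b :
  reach R s a b -> cmin R E ^+ size s <= mprod [seq Mmat R (E:=E) x | x <- s] a b.
Proof.
elim: s a b => [|x s IH] a b /=.
  by move=> ->; rewrite /mid eqxx expr0.
move=> [c [hc hr]]; rewrite /mmul (bigD1 c) //=.
apply: (@le_trans _ _ (Mmat R x a c * mprod [seq Mmat R x0 | x0 <- s] c b)).
  2: by rewrite lerDl; apply: sumr_ge0 => c' _; rewrite mulr_ge0 ?Mmat_ge0 ?mprod_ge0.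
rewrite exprS; apply: ler_pM; rewrite ?cmin_ge0 ?exprn_ge0 ?cmin_ge0 //.
  exact: cmin_le.
exact: IH.
Qed.

Definition xT m (E : {set 'I_m * 'I_m}) : {ffun edge_t E -> bool} := [ffun _ => true].

Lemma Mpos_cases (R : realType) m (E : {set 'I_m * 'I_m}) (x : {ffun edge_t E -> bool})
  (a c : idx E) :
  0 < Mmat R x a c ->
  match a, c with
  | inl u, inl v => is_true ((u, v) \in E)
  | inl u, inr e => (val e).1 = u
  | inr e, inl v => (val e).2 = v
  | inr e, inr e' => e = e' /\ ~~ x e
  end.
Proof.
case: a => [u|e]; case: c => [v|e'] /=.
- by case: insubP => [e0 He0 Hv _|_]; [rewrite -Hv; exact: (valP e0)|rewrite ltxx].
- by case: eqP => // _; rewrite ltxx.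
- by case: eqP => // _; rewrite ltxx.
- case: eqP => [<-|_]; last by rewrite ltxx.
  by case: (x e); rewrite /= ?ltxx.
Qed.

Lemma outdeg_gt0 m (E : {set 'I_m * 'I_m}) u v : (u, v) \in E -> (0 < outdeg E u)%N.
Proof. by move=> h; apply/card_gt0P; exists v; rewrite in_setE. Qed.

Lemma MT_edge (R : realType) m (E : {set 'I_m * 'I_m}) (u v : 'I_m) :
  (u, v) \in E -> 0 < Mmat R (xT E) (inl u) (inl v).
Proof.
move=> h /=; case: insubP => [e _ _|]; last by rewrite h.
by rewrite ffunE /= divr_gt0 // ?ltr01 // ltr0n (outdeg_gt0 h).
Qed.

Lemma MT_inr (R : realType) m (E : {set 'I_m * 'I_m}) (e : edge_t E) :
  0 < Mmat R (xT E) (inr e) (inl (val e).2).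
Proof. by rewrite /= eqxx ffunE ltr01. Qed.

Lemma reachT1 (R : realType) m (E : {set 'I_m * 'I_m}) k (v : 'I_m) b :
  (forall i : 'I_m, (i, i) \in E) ->
  reach R (nseq k (xT E)) (inl v) b -> reach R (nseq k.+1 (xT E)) (inl v) b.
Proof. by move=> loops h; exists (inl v); split => //; exact: MT_edge. Qed.

Lemma reachT2 (R : realType) m (E : {set 'I_m * 'I_m}) k (e : edge_t E) i :
  reach R (nseq k (xT E)) (inr e) (inl i) ->
  exists k', k = k'.+1 /\ reach R (nseq k' (xT E)) (inl (val e).2) (inl i).
Proof.
case: k => [//|k] /= [c [hc hr]]; exists k; split => //.
move: (@Mpos_cases R m E (xT E) (inr e) c hc); case: c hc hr => [v|e'] hc hr.
- by move=> h; move: hr; rewrite -h.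
- by move=> [_]; rewrite ffunE.
Qed.

Lemma reachT3 (R : realType) m (E : {set 'I_m * 'I_m}) k (e : edge_t E) b :
  reach R (nseq k (xT E)) (inl (val e).2) b -> reach R (nseq k.+1 (xT E)) (inr e) b.
Proof. by move=> h; exists (inl (val e).2); split => //; exact: MT_inr. Qed.

Lemma reach_T (R : realType) m (E : {set 'I_m * 'I_m}) s (a : idx E) i :
  (forall i : 'I_m, (i, i) \in E) ->
  reach R s a (inl i) -> reach R (nseq (size s) (xT E)) a (inl i).
Proof.
move=> loops; elim: s a => [|x s IH] a //; move=> [c [hc hr]].
have IHc := IH c hr.
move: (Mpos_cases hc); case: a hc => [u|e]; case: c hr IHc => [v|e'] hr IHc hc /=.
- by move=> huv; exists (inl v); split => //; exact: MT_edge.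
- move=> he; have [k' [hk hr']] := reachT2 IHc.
  rewrite hk; exists (inl (val e').2); split.
    by apply: MT_edge; rewrite -he -surjective_pairing (valP e').
  exact: reachT1.
- by move=> h; move: IHc; rewrite -h; exact: reachT3.
- move=> [h _]; move: IHc; rewrite -h => IHc; have [k' [hk hr']] := reachT2 IHc.
  exists (inl (val e).2); split; first exact: (@MT_inr R m E e).
  by rewrite hk; apply: reachT1.
Qed.

Lemma map_const_in (A B : eqType) (f : A -> B) (c : B) (s : seq A) :
  (forall j, j \in s -> f j = c) -> map f s = nseq (size s) c.
Proof.
elim: s => [|y s IH] h //=; rewrite h ?mem_head // IH // => j hj.
by apply: h; rewrite in_cons hj orbT.
Qed.

Lemma block_bound (R : realType) m (E : {set 'I_m * 'I_m}) (z0 : idx E -> R) Xs k l i :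
  (forall i : 'I_m, (i, i) \in E) ->
  (forall a, 0 <= z0 a) ->
  (forall a, reach R (nseq l (xT E)) a (inl i)) ->
  (forall r, (r < l)%N -> Xs (k + r)%N = xT E) ->
  cmin R E ^+ l * \sum_a z0 a <= zseq z0 Xs (k + l) (inl i).
Proof.
move=> loops z0ge reachT hX.
rewrite zseq_add zseq_prod.
have -> : [seq Mmat R (Xs (k + j)%N) | j <- iota 0 l] =
          [seq Mmat R x | x <- nseq l (xT E)].
  rewrite map_nseq (map_const_in (c := Mmat R (xT E))) ?size_iota //.
  by move=> j; rewrite mem_iota add0n => /andP[_ hj]; rewrite hX.
rewrite /vmul -(zseq_sum z0 Xs k loops) big_distrr /=.
apply: ler_sum => a _; rewrite [X in X <= _]mulrC; apply: ler_wpM2l.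
  exact: zseq_ge0.
by have := reach_lb (reachT a); rewrite size_nseq.
Qed.

Lemma geom_small (R : realType) (r x : R) : 0 <= r < 1 -> (forall J, x <= r ^+ J) -> x <= 0.
Proof.
move=> /andP[r0 r1] h.
have hc : (GRing.exp r : R ^nat) n @[n --> \oo] --> 0.
  by apply: cvg_expr; rewrite ger0_norm.
apply: (cvgr_to_ge hc).
by near=> n; apply: h.
Unshelve. all: by end_near.
Qed.

Definition Cyl (d : measure_display) (T : measurableType d) m (E : {set 'I_m * 'I_m})
  (X : nat -> T -> {ffun edge_t E -> bool})
  (F : seq (nat * edge_t E)) (b : nat * edge_t E -> bool) : set T :=
  [set t | forall p, p \in F -> X p.1 t p.2 = b p].

Lemma Cyl_meas (d : measure_display) (T : measurableType d) m (E : {set 'I_m * 'I_m})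
  (X : nat -> T -> {ffun edge_t E -> bool}) F b :
  (forall k e, measurable [set t | X k t e]) -> measurable (Cyl X F b).
Proof.
move=> hm; elim: F => [|p F IH].
  have -> : Cyl X [::] b = setT by apply/seteqP; split => t //= _ p.
  exact: measurableT.
have -> : Cyl X (p :: F) b = [set t | X p.1 t p.2 = b p] `&` Cyl X F b.
  apply/seteqP; split => t /=.
  - by move=> h; split; [apply: h; rewrite mem_head|move=> p' hp'; apply: h; rewrite in_cons hp' orbT].
  - move=> [h1 h2] p'; rewrite in_cons => /orP[/eqP ->//|]; exact: h2.
apply: measurableI => //.
case hb: (b p).
- exact: hm.
- have -> : [set t | X p.1 t p.2 = false] = ~` [set t | X p.1 t p.2].
    by apply/seteqP; split => t /=; case: (X p.1 t p.2).
  exact/measurableC/hm.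
Qed.

Lemma zseq_ext (R : realType) m (E : {set 'I_m * 'I_m}) (z0 : idx E -> R) f g k :
  (forall j, (j < k)%N -> f j = g j) -> zseq z0 f k = zseq z0 g k.
Proof.
elim: k => [|k IH] h //=; rewrite IH ?h // => j hj; apply: h; exact: ltnW.
Qed.

Lemma meas_dep (d : measure_display) (T : measurableType d) m (E : {set 'I_m * 'I_m})
  (X : nat -> T -> {ffun edge_t E -> bool}) k :
  (forall k e, measurable [set t | X k t e]) ->
  forall (Q : (nat -> {ffun edge_t E -> bool}) -> Prop),
  (forall f g, (forall j, (j < k)%N -> f j = g j) -> Q f -> Q g) ->
  measurable [set t | Q (X^~ t)].
Proof.
move=> hm; elim: k => [|k IH] Q hQ.
  case: (pselect (Q (fun _ => xT E))) => hq.
  - have -> : [set t | Q (X^~ t)] = setT.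
      by apply/seteqP; split => t //= _; apply: (hQ _ _ _ hq).
    exact: measurableT.
  - have -> : [set t | Q (X^~ t)] = set0.
      by apply/seteqP; split => t //= ht; apply: hq; apply: (hQ _ _ _ ht).
    exact: measurable0.
have -> : [set t | Q (X^~ t)] =
  \bigcup_(v in [set: {ffun edge_t E -> bool}])
    ([set t | X k t = v] `&` [set t | Q (fun j => if j == k then v else X j t)]).
  apply/seteqP; split => t /=.
  - move=> ht; exists (X k t) => //; split => //.
    by apply: (hQ _ _ _ ht) => j _; case: eqP => // ->.
  - move=> [v _ [hv hq]]; apply: (hQ _ _ _ hq) => j hj.
    by case: eqP => // ->.
apply: fin_bigcup_measurable; first exact: finite_finset.
move=> v _; apply: measurableI.
- have -> : [set t | X k t = v] =
            Cyl X [seq (k, e) | e <- enum (edge_t E)] (fun p => v p.2).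
    apply/seteqP; split => t /=.
    + by move=> hv p /mapP[e _ ->]; rewrite /= hv.
    + move=> h; apply/ffunP => e; apply: (h (k, e)).
      by apply/mapP; exists e; rewrite ?mem_enum.
  exact: Cyl_meas.
- apply: (IH (fun f => Q (fun j => if j == k then v else f j))) => f g hfg.
  apply: hQ => j hj; case: eqP => // hjk; apply: hfg.
  by rewrite ltn_neqAle -ltnS hj andbT; apply/eqP.
Qed.

Definition Fblk m (E : {set 'I_m * 'I_m}) (l k0 : nat) : seq (nat * edge_t E) :=
  [seq ((k0 + val r.1)%N, r.2) | r <- enum {: 'I_l * edge_t E}].

Lemma Fblk_uniq m (E : {set 'I_m * 'I_m}) l k0 : uniq (Fblk E l k0).
Proof.
rewrite map_inj_uniq ?enum_uniq // => [[a e] [a' e']] /= [h1 h2].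
by rewrite h2; congr pair; apply: ord_inj; apply: (@addnI k0).
Qed.

Lemma Fblk_mem m (E : {set 'I_m * 'I_m}) l k0 p :
  p \in Fblk E l k0 -> (k0 <= p.1 < k0 + l)%N.
Proof.
by move=> /mapP[[a e] _ ->] /=; rewrite leq_addr ltn_add2l ltn_ord.
Qed.

Lemma Fblk_in m (E : {set 'I_m * 'I_m}) l k0 r (e : edge_t E) :
  (r < l)%N -> ((k0 + r)%N, e) \in Fblk E l k0.
Proof.
move=> hr; apply/mapP; exists (Ordinal hr, e) => //; by rewrite mem_enum.
Qed.

Lemma A_xT (d : measure_display) (T : measurableType d) m (E : {set 'I_m * 'I_m})
  (X : nat -> T -> {ffun edge_t E -> bool}) l k0 t :
  Cyl X (Fblk E l k0) (fun _ => true) t ->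
  forall r, (r < l)%N -> X (k0 + r)%N t = xT E.
Proof.
move=> h r hr; apply/ffunP => e; rewrite ffunE.
by apply: (h ((k0 + r)%N, e)); apply: Fblk_in.
Qed.

Lemma PA_eq (d : measure_display) (T : measurableType d) (R : realType) (P : probability T R)
  m (E : {set 'I_m * 'I_m}) (q : edge_t E -> R) (X : nat -> T -> {ffun edge_t E -> bool}) l k0 :
  (forall k e, P [set t | X k t e] = (q e)%:E) ->
  indep_links P X ->
  P (Cyl X (Fblk E l k0) (fun _ => true)) =
  (\prod_(r <- enum {: 'I_l * edge_t E}) q r.2)%:E.
Proof.
move=> hq hind; rewrite /Cyl hind ?Fblk_uniq // big_map -prodEFin.
by apply: eq_bigr => r _ /=; exact: hq.
Qed.

Lemma Cyl_cat (d : measure_display) (T : measurableType d) m (E : {set 'I_m * 'I_m})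
  (X : nat -> T -> {ffun edge_t E -> bool}) F1 F2 b1 :
  (forall p, p \in F1 -> p \notin F2) ->
  Cyl X (F1 ++ F2) (fun p => if p \in F2 then true else b1 p) =
  Cyl X F1 b1 `&` Cyl X F2 (fun _ => true).
Proof.
move=> hdis; apply/seteqP; split => t /=.
- move=> h; split => p hp.
  + by have := h p; rewrite mem_cat hp (negbTE (hdis p hp)) => /(_ isT).
  + by have := h p; rewrite mem_cat hp orbT => /(_ isT).
- move=> [h1 h2] p; rewrite mem_cat => /orP[hp|hp].
  + by rewrite (negbTE (hdis p hp)); apply: h1.
  + by rewrite hp; apply: h2.
Qed.

Lemma Cyl_cat_P (d : measure_display) (T : measurableType d) (R : realType) (P : probability T R)
  m (E : {set 'I_m * 'I_m}) (X : nat -> T -> {ffun edge_t E -> bool}) F1 F2 b1 :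
  indep_links P X -> uniq F1 -> uniq F2 ->
  (forall p, p \in F1 -> p \notin F2) ->
  P (Cyl X (F1 ++ F2) (fun p => if p \in F2 then true else b1 p)) =
  (P (Cyl X F1 b1) * P (Cyl X F2 (fun _ => true)))%E.
Proof.
move=> hind u1 u2 hdis.
have u12 : uniq (F1 ++ F2).
  rewrite cat_uniq u1 u2 andbT; apply/hasPn => p hp2; apply/negP => hp1.
  by move: (hdis p hp1); rewrite hp2.
rewrite /Cyl !hind // big_cat /=; congr (_ * _)%E.
- by apply: eq_big_seq => p hp; rewrite (negbTE (hdis p hp)).
- by apply: eq_big_seq => p ->.
Qed.

Definition Blk (d : measure_display) (T : measurableType d) m (E : {set 'I_m * 'I_m})
  (X : nat -> T -> {ffun edge_t E -> bool}) l N J : set T :=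
  [set t | forall j, (j < J)%N -> ~ Cyl X (Fblk E l (N + j * l)) (fun _ => true) t].

Lemma Blk_S (d : measure_display) (T : measurableType d) m (E : {set 'I_m * 'I_m})
  (X : nat -> T -> {ffun edge_t E -> bool}) l N J :
  Blk X l N J.+1 = Blk X l N J `&` ~` Cyl X (Fblk E l (N + J * l)) (fun _ => true).
Proof.
apply/seteqP; split => t /=.
- by move=> h; split => [j hj|]; apply: h => //; exact: ltnW.
- move=> [h1 h2] j; rewrite ltnS leq_eqVlt => /orP[/eqP ->//|]; exact: h1.
Qed.

Lemma Blk_meas (d : measure_display) (T : measurableType d) m (E : {set 'I_m * 'I_m})
  (X : nat -> T -> {ffun edge_t E -> bool}) l N J :
  (forall k e, measurable [set t | X k t e]) -> measurable (Blk X l N J).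
Proof.
move=> hm; elim: J => [|J IH].
  have -> : Blk X l N 0 = setT by apply/seteqP; split => t // _ j.
  exact: measurableT.
rewrite Blk_S; apply: measurableI => //; apply: measurableC; exact: Cyl_meas.
Qed.

Lemma Pfin (d : measure_display) (T : measurableType d) (R : realType) (P : probability T R) A :
  measurable A -> P A = (fine (P A))%:E.
Proof.
move=> mA; rewrite fineK //; apply: fin_num_measure; exact: mA.
Qed.

Lemma blocks_ind (d : measure_display) (T : measurableType d) (R : realType) (P : probability T R)
  m (E : {set 'I_m * 'I_m}) (q : edge_t E -> R) (X : nat -> T -> {ffun edge_t E -> bool}) l N :
  (forall k e, measurable [set t | X k t e]) ->
  (forall k e, P [set t | X k t e] = (q e)%:E) ->
  indep_links P X ->
  forall J (FC : seq (nat * edge_t E)) bC, uniq FC ->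
  (forall p, p \in FC -> (N + J * l <= p.1)%N) ->
  P (Blk X l N J `&` Cyl X FC bC) =
  (((1 - \prod_(r <- enum {: 'I_l * edge_t E}) q r.2) ^+ J)%:E * P (Cyl X FC bC))%E.
Proof.
move=> hm hq hind; elim => [|J IH] FC bC uFC hFC.
  have -> : Blk X l N 0 = setT by apply/seteqP; split => t // _ j.
  by rewrite setTI expr0 mul1e.
set pA := \prod_(r <- enum {: 'I_l * edge_t E}) q r.2.
set FJ := Fblk E l (N + J * l).
set C := Cyl X FC bC.
have hdis : forall p, p \in FC -> p \notin FJ.
  move=> p hp; apply/negP => /Fblk_mem /andP[_ h2].
  by move: (hFC p hp) h2; rewrite mulSn; lia.
have hFC' : forall p, p \in FC -> (N + J * l <= p.1)%N.
  move=> p hp; apply: leq_trans (hFC p hp); by rewrite leq_add2l leq_mul2r leqnSn orbT.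
set V := Cyl X (FC ++ FJ) (fun p => if p \in FJ then true else bC p).
have hV : V = C `&` Cyl X FJ (fun _ => true) by apply: Cyl_cat.
have mB := Blk_meas l N J hm.
have mC : measurable C by apply: Cyl_meas.
have mV : measurable V by apply: Cyl_meas.
have -> : Blk X l N J.+1 `&` C = (Blk X l N J `&` C) `\` (Blk X l N J `&` V).
  rewrite Blk_S hV; apply/seteqP; split => t /=.
  - by move=> [[hb hna] hc]; split => // -[_ [_ ha]].
  - by move=> [[hb hc] hn]; split => //; split => // ha; apply: hn.
have eqD : P ((Blk X l N J `&` C) `\` (Blk X l N J `&` V)) =
    (P (Blk X l N J `&` C) - P (Blk X l N J `&` V))%E.
  rewrite measureD; first last.
  - by apply: (le_lt_trans (probability_le1 P (measurableI _ _ mB mC))); rewrite ltry.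
  - exact: measurableI.
  - exact: measurableI.
  congr (_ - P _)%E.
  rewrite hV; apply/seteqP; split => t /=; first by move=> [_ h].
  by move=> [hb [hc ha]].
rewrite eqD /V /C (IH FC bC) // (IH (FC ++ FJ) (fun p => if p \in FJ then true else bC p)) //; last first.
- move=> p; rewrite mem_cat => /orP[|/Fblk_mem /andP[]//]; exact: hFC'.
- rewrite cat_uniq uFC Fblk_uniq andbT; apply/hasPn => p hp2; apply/negP => hp1.
  by move: (hdis p hp1); rewrite hp2.
rewrite Cyl_cat_P // ?Fblk_uniq // (@PA_eq d T R P m E q X l (N + J * l) hq hind).
rewrite (Pfin P mC) -!EFinM -EFinB; congr EFin.
rewrite exprS /pA; ring.
Qed.

Unset Implicit Arguments.
Set Strict Implicit.

Theorem lemma4 (R : realType) (m : nat) (E : {set 'I_m * 'I_m})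
  (d : measure_display) (T : measurableType d) (P : probability T R)
  (q : edge_t E -> R) (X : nat -> T -> {ffun edge_t E -> bool})
  (z0 : idx E -> R) (mu_z : R) (l : nat) :
  (* graph: self-loops and strong connectivity *)
  (forall i : 'I_m, (i, i) \in E) ->
  (forall i j : 'I_m, connect (fun u v => (u, v) \in E) i j) ->
  (* link reliabilities q_e in (0,1] *)
  (forall e, 0 < q e <= 1) ->
  (* X k t e : reliability of link e at time step k+1 *)
  (forall k e, measurable [set t | X k t e]) ->
  (forall k e, P [set t | X k t e] = (q e)%:E) ->
  indep_links P X ->
  (* initial vector *)
  (forall i : 'I_m, 0 <= z0 (inl i)) ->
  (forall e : edge_t E, z0 (inr e) = 0) ->
  0 < \sum_(a : idx E) z0 a ->
  0 < mu_z -> mu_z <= \sum_(a : idx E) z0 a ->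
  (* l *)
  (0 < l)%N ->
  (forall i : 'I_m, exists s : seq {ffun edge_t E -> bool},
      size s = l /\
      forall a : idx E, 0 < mprod [seq Mmat R x | x <- s] a (inl i)) ->
  forall i : 'I_m,
    P [set t | forall N : nat, exists2 k : nat, (N <= k)%N &
         mu_z * cmin R E ^+ l / #|idx E|%:R <= zseq z0 (X^~ t) k (inl i)] = 1%E.
Proof.
move=> loops _ hq01 hm hq hind z0V z0E _ hmu0 hmule _ hs i.
set mu := mu_z * cmin R E ^+ l / #|idx E|%:R.
have z0ge : forall a, 0 <= z0 a by case=> [u|e]; rewrite ?z0E.
have reachT : forall a, reach R (nseq l (xT E)) a (inl i).
  have [s [hsz hpos]] := hs i => a.
  rewrite -hsz; apply: reach_T => //; exact: reach_of_pos.
have hmu : forall t k, (forall r, (r < l)%N -> X (k + r)%N t = xT E) ->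
    mu <= zseq z0 (X^~ t) (k + l) (inl i).
  move=> t k hX; apply: le_trans (block_bound (Xs := X^~ t) loops z0ge reachT hX).
  have c0 := cmin_ge0 R E.
  have cl0 : 0 <= cmin R E ^+ l by apply: exprn_ge0.
  have n1 : 1 <= #|idx E|%:R :> R.
    by rewrite ler1n; apply/card_gt0P; exists (inl i).
  rewrite /mu mulrC; apply: (@le_trans _ _ (mu_z * cmin R E ^+ l)).
    apply: ler_piMl; first by rewrite mulr_ge0 // ltW.
    by rewrite invf_le1 // (lt_le_trans ltr01 n1).
  by rewrite mulrC; apply: ler_wpM2l.
set Z := fun k => [set t | mu <= zseq z0 (X^~ t) k (inl i)].
have mZ : forall k, measurable (Z k).
  move=> k; rewrite /Z; apply: (@meas_dep d T m E X k hm (fun f => mu <= zseq z0 f k (inl i))).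
  by move=> f g hfg; rewrite (zseq_ext z0 hfg).
set U := fun N => \bigcup_(k in [set k | (N <= k)%N]) Z k.
have mU : forall N, measurable (U N) by move=> N; apply: bigcup_measurable => k _.
have hG : [set t | forall N : nat, exists2 k : nat, (N <= k)%N &
         mu <= zseq z0 (X^~ t) k (inl i)] = \bigcap_N U N.
  apply/seteqP; split => t /=.
  - by move=> h N _; have [k hk hz] := h N; exists k.
  - by move=> h N; have [k hk hz] := h N I; exists k.
rewrite hG.
set pA := \prod_(r <- enum {: 'I_l * edge_t E}) q r.2.
have pA0 : 0 < pA by apply: prodr_gt0 => r _; case/andP: (hq01 r.2).
have pA1 : pA <= 1 by apply: prodr_ile1 => r _; case/andP: (hq01 r.2) => h1 h2; rewrite ltW.
have null : forall N, P (~` U N) = 0%E.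
  move=> N.
  have mCU : measurable (~` U N) by apply: measurableC.
  have hB : forall J, (P (~` U N) <= ((1 - pA) ^+ J)%:E)%E.
    move=> J.
    have := @blocks_ind d T R P m E q X l N hm hq hind J [::] (fun _ => true) isT (fun p => ltac:(done)).
    have -> : Cyl X [::] (fun _ => true) = setT by apply/seteqP; split => t //= _ p.
    rewrite setIT probability_setT mule1 => <-.
    apply: le_measure; rewrite ?inE //; first exact: Blk_meas.
    move=> t /= hnU j hj hA; apply: hnU.
    exists (N + j * l + l)%N; first by rewrite /= -addnA leq_addr.
    rewrite /Z /=; apply: hmu => r hr.
    exact: (A_xT hA).
  have x0 : 0 <= fine (P (~` U N)) by rewrite fine_ge0.
  rewrite (Pfin P mCU); congr EFin; apply/eqP; rewrite eq_le x0 andbT.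
  apply: (@geom_small R (1 - pA)).
    by rewrite subr_ge0 pA1 /= ltrBlDr ltrDl.
  by move=> J; rewrite -lee_fin -(Pfin P mCU).
have mI : measurable (\bigcap_N U N) by apply: bigcapT_measurable.
have hC : ~` (\bigcap_N U N) = \bigcup_N ~` U N by rewrite setC_bigcap.
have nullC : P (~` (\bigcap_N U N)) = 0%E.
  have [A [mA PA0 hsub]] : P.-negligible (\bigcup_N ~` U N).
    apply: negligible_bigcup => N; exists (~` U N); split => //.
    exact: measurableC. exact: null.
  apply/eqP; rewrite eq_le measure_ge0 andbT -PA0.
  apply: le_measure; rewrite ?inE //; first exact: measurableC.
  by rewrite hC.
rewrite -[X in P X]setCK probability_setC; last exact: measurableC.
by rewrite nullC sube0.
Qed.
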